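(* For every integer $k\ge 6$, there exist aperiodic recurrent infinite words avoiding $(k,k-5)$-anti-powers.
   Context: A word avoids a class of words if no factor (contiguous subword) belongs to the class. A $(k,\lambda)$-anti-power is a word $w=w_1\cdots w_k$ with $|w_1|=\cdots=|w_k|\ge1$ such that $|\{i: w_i=w_j\}|\le\lambda$ for each $j\in\{1,\dots,k\}$. An infinite word is recurrent if every finite factor occurs infinitely often. An infinite word $x$ is eventually periodic if some suffix of $x$ equals $u^\omega$ for a finite word $u$; otherwise it is aperiodic. *)

(* Defs.v *)
From mathcomp Require Import all_boot.
Set Implicit Arguments. Unset Strict Implicit. Unset Printing Implicit Defensive.

(* Infinite words over a finite alphabet: x : nat -> nat with x i < b for all i.
   Finite words: seq nat. *)

Definition factor (x : nat -> nat) (i n : nat) : seq nat := mkseq (fun t => x (i + t)) n.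

Definition block (w : seq nat) (m j : nat) : seq nat := take m (drop (j * m) w).

Definition anti_power (k lam : nat) (w : seq nat) : Prop :=
  exists m, 0 < m /\ size w = k * m /\
    forall j, j < k ->
      count (fun i => block w m i == block w m j) (iota 0 k) <= lam.

Definition avoids_anti_powers (k lam : nat) (x : nat -> nat) : Prop :=
  forall i n, ~ anti_power k lam (factor x i n).

Definition recurrent (x : nat -> nat) : Prop :=
  forall i n N, exists j, N <= j /\ factor x j n = factor x i n.

Definition eventually_periodic (x : nat -> nat) : Prop :=
  exists p N, 0 < p /\ forall i, N <= i -> x (i + p) = x i.

Definition aperiodic (x : nat -> nat) : Prop := ~ eventually_periodic x.

(* Main.v *)
Require Import Defs.
From mathcomp Require Import all_boot.
From mathcomp Require Import zify.
Set Implicit Arguments. Unset Strict Implicit. Unset Printing Implicit Defensive.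

Definition digit (c j i : nat) := (i %/ c ^ j) %% c.
Definition good (c i : nat) := all (fun j => digit c j i <= 1) (iota 0 i.+1).
Definition xw (c i : nat) : nat := good c i.

Lemma expc_pos c j : 0 < c -> 0 < c ^ j.
Proof. by move=> h; rewrite expn_gt0 h. Qed.

Lemma digit_big c j i : i < c ^ j -> digit c j i = 0.
Proof. by move=> h; rewrite /digit divn_small // mod0n. Qed.

Lemma goodP c i : 2 <= c -> reflect (forall j, digit c j i <= 1) (good c i).
Proof.
move=> c2; apply: (iffP allP) => H j.
- case: (leqP j i) => hj.
  + by apply: H; rewrite mem_iota; lia.
  + rewrite digit_big //; apply: ltn_trans hj (ltn_expl _ _); lia.
- by move=> _; exact: H.
Qed.

Lemma digit_shift c r M j : 2 <= c -> r < c ^ M -> j != M ->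
  digit c j (r + c ^ M) = digit c j r.
Proof.
move=> c2 hr hne; case: (ltnP j M) => hj.
- have -> : c ^ M = (c ^ (M - j - 1) * c) * c ^ j.
    rewrite -expnSr -expnD; f_equal; lia.
  rewrite /digit addnC divnMDl; last by apply: expc_pos; lia.
  by rewrite modnMDl.
- have hjM : M < j by rewrite ltn_neqAle eq_sym hne hj.
  have h1 : c ^ M.+1 <= c ^ j by apply: leq_pexp2l; lia.
  have h2 : c ^ M.+1 = c ^ M * c by rewrite expnSr.
  rewrite !digit_big //; nia.
Qed.

Lemma good_shift c r M : 3 <= c -> r < c ^ M -> good c (r + c ^ M) = good c r.
Proof.
move=> c3 hr; have c2 : 2 <= c by lia.
apply/(goodP _ c2)/(goodP _ c2) => H j; case: (eqVneq j M) => [->|hne].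
- by rewrite digit_big.
- by have := H j; rewrite digit_shift.
- rewrite /digit -{1}(mul1n (c ^ M)) addnC divnMDl; last by apply: expc_pos; lia.
  rewrite divn_small // addn0 modn_small //; lia.
- by rewrite digit_shift //; apply: H.
Qed.

Lemma good0 c : 2 <= c -> good c 0.
Proof. by move=> c2; apply/goodP => // j; rewrite /digit div0n mod0n. Qed.

Lemma xw_shift c r M : 3 <= c -> r < c ^ M -> xw c (r + c ^ M) = xw c r.
Proof. by move=> c3 hr; rewrite /xw good_shift. Qed.

Lemma one_struct c m n i : 2 <= c -> 0 < m -> m < 2 * c ^ n ->
  (n = 0 \/ 2 * c ^ n.-1 <= m) -> good c i ->
  exists e s, e <= 1 /\ s < m /\
    i = (i %/ (c ^ n * c)) * (c ^ n * c) + e * c ^ n + s.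
Proof.
move=> c2 m0 hm hn /(goodP _ c2) G.
exists (digit c n i), (i %% c ^ n); split; first exact: G.
split.
- case: n hm hn => [|n'] hm hn /=.
  + by rewrite expn0 modn1.
  + case: hn => // hn; rewrite /= in hn.
    have G' := G n'; rewrite /digit in G'.
    rewrite expnSr.
    set P' := c ^ n' in hn G' *.
    have e1 := divn_eq i P'.
    have e2 := divn_eq (i %/ P') c.
    have e3 := divn_eq i (P' * c).
    rewrite divnMA in e3.
    have l1 : i %% P' < P' by apply: ltn_pmod; apply: expc_pos; lia.
    have l2 : i %% (P' * c) < P' * c by apply: ltn_pmod; rewrite muln_gt0; apply/andP; split; [apply: expc_pos|]; lia.
    nia.
- rewrite /digit divnMA.
  have e1 := divn_eq i (c ^ n).
  have e2 := divn_eq (i %/ c ^ n) c.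
  nia.
Qed.

Lemma same_quot k c m P i i' a : 0 < k -> 2 * k + 3 <= c -> m < 2 * P ->
  a <= i -> i < a + k * m -> a <= i' -> i' < a + k * m ->
  forall e s e' s', e <= 1 -> s < m -> e' <= 1 -> s' < m ->
  i = (i %/ (P * c)) * (P * c) + e * P + s ->
  i' = (i' %/ (P * c)) * (P * c) + e' * P + s' ->
  i %/ (P * c) <= i' %/ (P * c).
Proof.
move=> k0 hc hm h1 h2 h3 h4 e s e' s' he hs he' hs' E E'.
rewrite leqNgt; apply/negP => hlt.
have : (i' %/ (P * c)).+1 * (P * c) <= (i %/ (P * c)) * (P * c) by apply: leq_mul.
have : k * m <= k * (2 * P) by apply: leq_mul; lia.
have : P * (2 * k + 3) <= P * c by apply: leq_mul.
nia.
Qed.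

Lemma block_pos U a m j i : 0 < m -> U <= i -> i < U + m -> a + j * m <= i -> i < a + j * m + m ->
  j = (U - a) %/ m \/ j = ((U - a) %/ m).+1.
Proof.
move=> m0 h1 h2 h3 h4.
have e := divn_eq (U - a) m.
have l := ltn_pmod (U - a) m0.
set d := (U - a) %/ m in e *.
have A : j < d.+2.
  rewrite -(ltn_pmul2r m0); nia.
have B : d <= j.
  rewrite -ltnS -(ltn_pmul2r m0); nia.
lia.
Qed.

Lemma block_factor (x : nat -> nat) a k m j : j < k ->
  block (factor x a (k * m)) m j = factor x (a + j * m) m.
Proof.
move=> hj; apply: (@eq_from_nth _ 0).
- rewrite /factor size_mkseq size_takel // size_drop size_mkseq; nia.
- move=> t; rewrite size_takel; last by rewrite size_drop /factor size_mkseq; nia.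
  move=> ht; rewrite nth_take // nth_drop /factor !nth_mkseq //; last nia.
  by rewrite addnA.
Qed.

Lemma factor_zero (x : nat -> nat) b m : (forall t, t < m -> x (b + t) = 0) ->
  factor x b m = nseq m 0.
Proof.
move=> H; apply: (@eq_from_nth _ 0); first by rewrite size_nseq /factor size_mkseq.
move=> t; rewrite /factor size_mkseq => ht; rewrite nth_mkseq // nth_nseq ht; exact: H.
Qed.

Lemma avoid k : 6 <= k -> avoids_anti_powers k (k - 5) (xw (2 * k + 3)).
Proof.
move=> k6 a n [m [m0 [sz H]]].
rewrite /factor size_mkseq in sz; subst n.
move: H; move Ec: (2 * k + 3) => c H.
have c3 : 3 <= c by lia.
have hc : 2 * k + 3 <= c by lia.
have c2 : 2 <= c by lia.
have exP : exists n, m < 2 * c ^ n.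
  exists m; have := ltn_expl m (ltnW c3); lia.
case: (ex_minnP exP) => n0 hn0 hmin.
have hn : n0 = 0 \/ 2 * c ^ n0.-1 <= m.
  case: n0 hn0 hmin => [|n1] hn0 hmin; [by left|right].
  rewrite leqNgt; apply/negP => h; have := hmin n1 h; lia.
have [P EP] : exists P, c ^ n0 = P by eexists.
pose G := fun j => (j < k) && all (fun t => xw c (a + j * m + t) == 0) (iota 0 m).
have Gblock : forall j, G j -> block (factor (xw c) a (k * m)) m j = nseq m 0.
  move=> j /andP [hj /allP A]; rewrite block_factor // factor_zero // => t ht.
  apply/eqP; apply: A; rewrite mem_iota; lia.
have ones : forall j, j < k -> ~~ G j -> exists t, t < m /\ good c (a + j * m + t).
  move=> j hj; rewrite /G hj /= => /allPn [t]; rewrite mem_iota => ht hne.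
  exists t; split; first lia.
  by move: hne; rewrite /xw; case: good.
have bad : count (predC G) (iota 0 k) <= 4.
  case: (boolP (has (predC G) (iota 0 k))) => hb; last first.
    by move: hb; rewrite has_count; lia.
  case/hasP: hb => j1; rewrite mem_iota => hj1 nG1.
  have [t1 [ht1 g1]] := ones j1 ltac:(lia) nG1.
  have [e0 [s0 [he0 [hs0 E0]]]] := one_struct c2 m0 hn0 hn g1.
  have [Q EQ] : exists Q, (a + j1 * m + t1) %/ (c ^ n0 * c) = Q by eexists.
  rewrite EP in EQ E0; have hmP : m < 2 * P by rewrite -EP.
  pose L := [:: (Q * (P * c) - a) %/ m; ((Q * (P * c) - a) %/ m).+1;
               (Q * (P * c) + P - a) %/ m; ((Q * (P * c) + P - a) %/ m).+1].
  rewrite -size_filter.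
  apply: (leq_trans (uniq_leq_size (s2 := L) _ _)) => //.
    by apply: filter_uniq; exact: iota_uniq.
  move=> j; rewrite mem_filter mem_iota => /andP [nGj hj].
  have [t [ht gj]] := ones j ltac:(lia) nGj.
  have [e [s [he [hs E]]]] := one_struct c2 m0 hn0 hn gj.
  rewrite EP in E.
  have hw : a + j * m + t < a + k * m.
    have : j.+1 * m <= k * m by apply: leq_mul.
    rewrite mulSn; lia.
  have hw1 : a + j1 * m + t1 < a + k * m.
    have : j1.+1 * m <= k * m by apply: leq_mul; lia.
    rewrite mulSn; lia.
  have hq : (a + j * m + t) %/ (P * c) = Q.
    rewrite -EQ; apply/eqP; rewrite eqn_leq; apply/andP; split.
    - apply: (@same_quot k c m P _ _ a _ _ _ _ _ _ _ e s e0 s0 _ _ _ _ E E0); lia.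
    - apply: (@same_quot k c m P _ _ a _ _ _ _ _ _ _ e0 s0 e s _ _ _ _ E0 E); lia.
  rewrite hq in E.
  have [he'|he'] : e = 0 \/ e = 1 by lia.
  - have := @block_pos (Q * (P * c)) a m j (a + j * m + t) m0 ltac:(lia) ltac:(lia) ltac:(lia) ltac:(lia).
    by case=> ->; rewrite !inE eqxx ?orbT.
  - have := @block_pos (Q * (P * c) + P) a m j (a + j * m + t) m0 ltac:(lia) ltac:(lia) ltac:(lia) ltac:(lia).
    by case=> ->; rewrite !inE eqxx ?orbT.
have cntG : k - 4 <= count G (iota 0 k).
  have := count_predC G (iota 0 k); rewrite size_iota; lia.
have : has G (iota 0 k) by rewrite has_count; lia.
case/hasP => j0 _ Gj0.
have hj0 : j0 < k by case/andP: Gj0.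
have := H j0 hj0.
have : count G (iota 0 k) <= count (fun i => block (factor (xw c) a (k * m)) m i ==
           block (factor (xw c) a (k * m)) m j0) (iota 0 k).
  by apply: sub_count => i Gi; rewrite /= !Gblock.
lia.
Qed.

Theorem theorem4p6 : forall k : nat, 6 <= k ->
  exists (b : nat) (x : nat -> nat),
    (forall i, x i < b) /\
    aperiodic x /\ recurrent x /\ avoids_anti_powers k (k - 5) x.
Proof.
move=> k k6.
exists 2, (xw (2 * k + 3)); split; [|split; [|split]].
- by move=> i; rewrite /xw; case: good.
- move=> [p [N [p0 Hp]]].
  move: Hp; move Ec: (2 * k + 3) => c Hp.
  have c3 : 3 <= c by lia.
  have c2 : 2 <= c by lia.
  have hC : N + p < c ^ (N + p) by apply: ltn_expl; lia.
  have cpos : 0 < c ^ (N + p) by apply: expc_pos; lia.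
  have g1 : xw c (c ^ (N + p) * c) = 1.
    rewrite -expnSr -[c ^ (N + p).+1]add0n xw_shift //; last first.
      by apply: expc_pos; lia.
    by rewrite /xw good0.
  have g0 : xw c (c ^ (N + p) * c - p) = 0.
    rewrite /xw; apply/eqP; rewrite eqb0; apply/negP => /(goodP _ c2) G.
    have := G (N + p); rewrite /digit.
    have -> : c ^ (N + p) * c - p = (c - 1) * c ^ (N + p) + (c ^ (N + p) - p).
      have e : (c - 1) * c ^ (N + p) + c ^ (N + p) = c ^ (N + p) * c.
        rewrite addnC -mulSn subn1 prednK; [exact: mulnC | lia].
      lia.
    rewrite divnMDl // divn_small ?addn0 ?modn_small; lia.
  have hle : p <= c ^ (N + p) * c.
    have : c ^ (N + p) <= c ^ (N + p) * c by apply: leq_pmulr; lia.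
    lia.
  have := Hp (c ^ (N + p) * c - p); rewrite subnK // g1 g0 => h.
  have : N <= c ^ (N + p) * c - p.
    have : c ^ (N + p) * 2 <= c ^ (N + p) * c by apply: leq_mul.
    lia.
  by move/h.
- move=> i n N.
  have c3 : 3 <= 2 * k + 3 by lia.
  have hC : i + n + N < (2 * k + 3) ^ (i + n + N) by apply: ltn_expl; lia.
  exists (i + (2 * k + 3) ^ (i + n + N)); split; first lia.
  apply: (@eq_from_nth _ 0); first by rewrite /factor !size_mkseq.
  move=> t; rewrite /factor size_mkseq => ht; rewrite !nth_mkseq //.
  rewrite addnAC xw_shift //; lia.
- exact: avoid.
Qed.
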